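(* There is an absolute constant $C>0$ such that for every field $\mathbb{F}$, every integer $n\ge 2$ and every nonzero alternating matrix space $\mathcal{A}\le\Lambda(n,\mathbb{F})$, we have $\chi(\mathcal{A})\le C\cdot\Delta(\mathcal{A})\cdot\log_2 n$.
   Context: $\Lambda(n,\mathbb{F})$ is the space of $n\times n$ alternating matrices over $\mathbb{F}$. A subspace $U\le\mathbb{F}^n$ is an isotropic space of $\mathcal{A}$ if $u^tAu'=0$ for all $u,u'\in U$, $A\in\mathcal{A}$. An isotropic $c$-decomposition is a direct sum decomposition $\mathbb{F}^n=U_1\oplus\cdots\oplus U_c$ into $c$ nonzero isotropic spaces; $\chi(\mathcal{A})$ is the least such $c$. For $v\in\mathbb{F}^n$, $\deg_{\mathcal{A}}(v)=\dim\langle Av : A\in\mathcal{A}\rangle$, and $\Delta(\mathcal{A})=\max\{\deg_{\mathcal{A}}(v): v\in\mathbb{F}^n\}$. *)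

(* Defs.v *)
From Stdlib Require Import Reals.
From HB Require Import structures.
From mathcomp Require Import all_boot all_order all_algebra.

Set Implicit Arguments.
Unset Strict Implicit.
Unset Printing Implicit Defensive.

Import GRing.Theory.
Local Open Scope ring_scope.

Section AltSpaces.
Variables (F : fieldType) (n : nat).

Definition alternating (M : 'M[F]_n) : Prop :=
  M^T = - M /\ forall i, M i i = 0.

Definition alt_space (A : {vspace 'M[F]_n}) : Prop :=
  forall M, M \in A -> alternating M.

Definition isotropic (A : {vspace 'M[F]_n}) (U : {vspace 'cV[F]_n}) : Prop :=
  forall M u u', M \in A -> u \in U -> u' \in U -> (u^T *m M *m u') 0 0 = 0.

Definition iso_decomp (A : {vspace 'M[F]_n}) (c : nat) : Prop :=
  exists U : 'I_c -> {vspace 'cV[F]_n},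
    [/\ (forall i, U i != 0%VS), (forall i, isotropic A (U i)),
        directv (\sum_(i < c) U i)%VS & (\sum_(i < c) U i)%VS = fullv].

Definition is_chi (A : {vspace 'M[F]_n}) (k : nat) : Prop :=
  iso_decomp A k /\ forall c, iso_decomp A c -> (k <= c)%N.

Definition deg_of (A : {vspace 'M[F]_n}) (v : 'cV[F]_n) : nat :=
  \dim (linfun (mulmxr v) @: A)%VS.

Definition is_Delta (A : {vspace 'M[F]_n}) (d : nat) : Prop :=
  (exists v, deg_of A v = d) /\ forall v, (deg_of A v <= d)%N.

End AltSpaces.

Definition log2R (n : nat) : R := Rdiv (ln (INR n)) (ln (INR 2)).

(* Main.v *)
Require Import Defs.
From Stdlib Require Import Reals Lra.

Lemma ln_le_sub1 (y : R) : (0 < y)%R -> (ln y <= y - 1)%R.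
Proof.
intro hy. pose proof (exp_ineq1_le (ln y)) as h. rewrite exp_ln in h; lra.
Qed.

Lemma key_real (a U D : R) : (1 <= a)%R -> (0 <= U)%R -> (a + U <= D * U)%R -> (0 <= D)%R ->
  (1 + D * ln a <= D * ln (a + U))%R.
Proof.
intros ha hU hb hD.
set (b := (a + U)%R).
assert (hb0 : (0 < b)%R) by (unfold b; lra).
assert (h1 : (ln a - ln b <= a / b - 1)%R).
{ replace (ln a - ln b)%R with (ln (a / b)).
  - apply ln_le_sub1. apply Rdiv_lt_0_compat; lra.
  - unfold Rdiv. rewrite ln_mult by (try lra; apply Rinv_0_lt_compat; lra).
    rewrite ln_Rinv by lra. ring. }
assert (h2 : (D * (a / b - 1) = - ((D * U) / b))%R) by (unfold b in *; field; lra).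
assert (h3 : (1 <= (D * U) / b)%R).
{ replace 1%R with (b / b)%R by (field; lra).
  unfold Rdiv. apply Rmult_le_compat_r.
  - left; apply Rinv_0_lt_compat; lra.
  - unfold b; lra. }
assert (h4 : (D * (ln a - ln b) <= D * (a / b - 1))%R) by (apply Rmult_le_compat_l; lra).
fold b. lra.
Qed.

Lemma ln_ge0 (x : R) : (1 <= x)%R -> (0 <= ln x)%R.
Proof.
intro h. destruct (Req_dec x 1) as [e|ne].
- subst; rewrite ln_1; lra.
- rewrite <- ln_1. left. apply ln_increasing; lra.
Qed.

Lemma base_real (m D : nat) : (1 <= m)%nat -> (INR 1 <= 1 + INR D * ln (INR m))%R.
Proof.
intro h. apply le_INR in h. pose proof (ln_ge0 _ h). pose proof (pos_INR D).
simpl. assert (0 <= INR D * ln (INR m))%R by (apply Rmult_le_pos; lra). lra.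
Qed.

Lemma step_real (s a u D : nat) : (1 <= a)%nat -> (a + u <= D * u)%nat ->
  (INR s <= 1 + INR D * ln (INR a))%R ->
  (INR (S s) <= 1 + INR D * ln (INR (u + a)))%R.
Proof.
intros h1 h2 h3. apply le_INR in h1. apply le_INR in h2.
rewrite plus_INR, mult_INR in h2. rewrite S_INR, plus_INR.
pose proof (pos_INR u). pose proof (pos_INR D).
pose proof (key_real (INR a) (INR u) (INR D) h1 (pos_INR u) h2 (pos_INR D)).
replace (INR u + INR a)%R with (INR a + INR u)%R by ring. simpl in h1. lra.
Qed.

Definition C3 : R := 3%R.

Lemma C3_pos : Rlt (INR 0) C3.
Proof. unfold C3; simpl; lra. Qed.

Lemma final_real (k s d n : nat) : (k <= s)%nat -> (1 <= d)%nat -> (2 <= n)%nat ->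
  (INR s <= 1 + INR (S d) * ln (INR n))%R ->
  Rle (INR k) (Rmult (Rmult C3 (INR d)) (Defs.log2R n)).
Proof.
intros hks hd hn hs. apply le_INR in hks. apply le_INR in hd. apply le_INR in hn.
unfold Defs.log2R, C3. simpl in hd, hn.
assert (hl2 : (0 < ln 2)%R) by (pose proof ln_lt_2; lra).
assert (hl2' : (ln 2 < 1)%R).
{ rewrite <- (ln_exp 1). apply ln_increasing; [lra|]. pose proof (exp_ineq1 1). lra. }
assert (hn2 : (ln 2 <= ln (INR n))%R).
{ destruct (Req_dec (INR n) 2) as [e|ne]; [rewrite e; lra|]. left; apply ln_increasing; lra. }
replace (INR 2) with 2%R by (simpl; lra).
set (L := (ln (INR n) / ln 2)%R).
assert (hL1 : (1 <= L)%R).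
{ unfold L. apply (Rmult_le_reg_r (ln 2)); [lra|]. unfold Rdiv. rewrite Rmult_assoc, Rinv_l by lra. lra. }
assert (hlnL : (ln (INR n) <= L)%R).
{ assert (e : ln (INR n) = (L * ln 2)%R) by (unfold L; field; lra). rewrite e.
  nra. }
rewrite S_INR in hs.
nra.
Qed.

From Stdlib Require Import Reals.
From HB Require Import structures.
From mathcomp Require Import all_boot all_order all_algebra.
Set Implicit Arguments.
Unset Strict Implicit.
Unset Printing Implicit Defensive.
Import GRing.Theory.
Local Open Scope ring_scope.

Section Form.
Variables (F : fieldType) (n : nat).

Lemma form_tr (M : 'M[F]_n) (x y : 'cV[F]_n) :
  (x^T *m M *m y) 0 0 = (y^T *m M^T *m x) 0 0.
Proof.
have -> : (x^T *m M *m y) 0 0 = ((x^T *m M *m y)^T) 0 0 by rewrite [in RHS]mxE.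
by rewrite !trmx_mul trmxK mulmxA.
Qed.

Lemma alt_self (M : 'M[F]_n) (x : 'cV[F]_n) : alternating M ->
  (x^T *m M *m x) 0 0 = 0.
Proof.
move=> [hT hd].
pose N := \matrix_(i, j) (if (i < j)%N then M i j else 0).
have eM : M = N - N^T.
  apply/matrixP => i j; rewrite !mxE.
  case: (ltngtP i j) => hij.
  - by rewrite subr0.
  - rewrite sub0r.
    have := congr1 (fun X : 'M[F]_n => X j i) hT; rewrite /= !mxE => ->.
    by [].
  - by move/val_inj: hij => ->; rewrite hd subr0.
have h1 : x^T *m N^T *m x = (x^T *m N *m x)^T by rewrite !trmx_mul trmxK mulmxA.
rewrite eM mulmxBr mulmxBl h1.
by move: (x^T *m N *m x) => B; rewrite !mxE subrr.
Qed.
End Form.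

From HB Require Import structures.
From mathcomp Require Import all_boot all_order all_algebra.
Set Implicit Arguments.
Unset Strict Implicit.
Unset Printing Implicit Defensive.
Import GRing.Theory.
Local Open Scope ring_scope.

Section Main.
Variables (F : fieldType) (n : nat) (A : {vspace 'M[F]_n}) (d : nat).
Hypothesis hA : alt_space A.
Hypothesis hd : forall v, (deg_of A v <= d)%N.

Definition img (v : 'cV[F]_n) := (linfun (mulmxr v) @: A)%VS.

Lemma mem_img M v : M \in A -> M *m v \in img v.
Proof. by move=> hM; have := memv_img (linfun (mulmxr v)) hM; rewrite lfunE. Qed.

Definition BU (U : {vspace 'cV[F]_n}) := (\sum_(i < \dim U) img (vbasis U)`_i)%VS.

Lemma mem_BU (U : {vspace 'cV[F]_n}) M (y : 'cV[F]_n) : M \in A -> y \in U -> M *m y \in BU U.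
Proof.
move=> hM hy; rewrite (coord_vbasis hy) mulmx_sumr.
apply: rpred_sum => i _; rewrite -scalemxAr; apply: rpredZ.
apply: (subvP (sumv_sup i (P := xpredT) (Vs := fun i => img (vbasis U)`_i) isT (subvv _))).
exact: mem_img.
Qed.

Lemma dim_BU (U : {vspace 'cV[F]_n}) : (\dim (BU U) <= \dim U * d)%N.
Proof.
have h1 := dimv_leq_sum (index_enum 'I_(\dim U)) xpredT (fun i => img (vbasis U)`_i).
apply: (leq_trans h1).
have h2 : (\sum_(i < \dim U) \dim (img (vbasis U)`_i) <= \sum_(i < \dim U) d)%N.
  by apply: leq_sum => i _; exact: hd.
apply: (leq_trans h2).
by rewrite sum_nat_const card_ord.
Qed.

Definition Bt (U : {vspace 'cV[F]_n}) : 'M[F]_(\dim (BU U), n) :=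
  \matrix_(i, j) ((vbasis (BU U))`_i) j 0.

Definition orth U : {vspace 'cV[F]_n} := lker (linfun (mulmx (Bt U))).

Lemma orthP (U : {vspace 'cV[F]_n}) (x y : 'cV[F]_n) M : x \in orth U -> y \in U -> M \in A ->
  (x^T *m M *m y) 0 0 = 0.
Proof.
rewrite memv_ker lfunE /= => /eqP hx hy hM.
have hz := mem_BU hM hy.
rewrite -mulmxA (coord_vbasis hz) mulmx_sumr summxE.
apply: big1 => i _; rewrite -scalemxAr mxE.
have -> : (x^T *m (vbasis (BU U))`_i) 0 0 = (Bt U *m x) i 0.
  rewrite !mxE; apply: eq_bigr => j _; rewrite !mxE mulrC.
  done.
by rewrite hx mxE mulr0.
Qed.

Lemma dim_orth (U W : {vspace 'cV[F]_n}) : (\dim W <= \dim (W :&: orth U) + \dim (BU U))%N.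
Proof.
rewrite -[X in (X <= _)%N](limg_ker_dim (linfun (mulmx (Bt U))) W) leq_add2l.
apply: leq_trans (dimvS (subvf _)) _.
by rewrite dimvf dim_matrix mulr1.
Qed.

End Main.

From Stdlib Require Import Classical.
From HB Require Import structures.
From mathcomp Require Import all_boot all_order all_algebra.
From mathcomp Require Import zify.
Set Implicit Arguments.
Unset Strict Implicit.
Unset Printing Implicit Defensive.
Import GRing.Theory.
Local Open Scope ring_scope.

Section Main2.
Variables (F : fieldType) (n : nat) (A : {vspace 'M[F]_n}) (d : nat).
Hypothesis hA : alt_space A.
Hypothesis hd : forall v, (deg_of A v <= d)%N.

Definition form (M : 'M[F]_n) (u v : 'cV[F]_n) := (u^T *m M *m v) 0 0.

Lemma formDl M u u' v : form M (u + u') v = form M u v + form M u' v.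
Proof. by rewrite /form linearD /= !mulmxDl mxE. Qed.
Lemma formDr M u v v' : form M u (v + v') = form M u v + form M u v'.
Proof. by rewrite /form mulmxDr mxE. Qed.
Lemma formZl M k u v : form M (k *: u) v = k * form M u v.
Proof. by rewrite /form linearZ /= -!scalemxAl mxE. Qed.
Lemma formZr M k u v : form M u (k *: v) = k * form M u v.
Proof. by rewrite /form -scalemxAr mxE. Qed.

Lemma form_skew M u v : M \in A -> form M u v = - form M v u.
Proof.
move=> /hA [hT _]; rewrite /form form_tr hT mulmxN.
by rewrite mulNmx mxE.
Qed.

Lemma iso_ext (U : {vspace 'cV[F]_n}) x : isotropic A U -> x \in orth A U ->
  isotropic A (U + <[x]>)%VS.
Proof.
move=> hU hx M u u' hM /memv_addP [a ha [b /vlineP [k ->] ->]]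
  /memv_addP [a' ha' [b' /vlineP [k' ->] ->]].
rewrite -/(form M _ _) formDl !formDr !formZl !formZr.
rewrite /form (hU M a a' hM ha ha') (orthP hx ha' hM).
rewrite -/(form M a x) (form_skew _ _ hM) /form (orthP hx ha hM).
by rewrite (alt_self x (hA hM)) !(mulr0, oppr0, addr0).
Qed.

Lemma iso0 : isotropic A 0%VS.
Proof. by move=> M u u' _; rewrite memv0 => /eqP -> _; rewrite trmx0 !mul0mx mxE. Qed.

Lemma max_iso (W : {vspace 'cV[F]_n}) : exists U : {vspace 'cV[F]_n},
  [/\ (U <= W)%VS, isotropic A U & (W :&: orth A U <= U)%VS].
Proof.
suff: forall k (U : {vspace 'cV[F]_n}), (n - \dim U <= k)%N -> (U <= W)%VS ->
   isotropic A U -> exists U : {vspace 'cV[F]_n},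
  [/\ (U <= W)%VS, isotropic A U & (W :&: orth A U <= U)%VS].
  by move=> /(_ n 0%VS); apply => //; [exact: leq_subr | exact: sub0v | exact: iso0].
elim=> [|k IH] U hk hUW hU.
all: case hs: (W :&: orth A U <= U)%VS; first by exists U.
all: have [x hx] : exists x, ~ (x \in (W :&: orth A U)%VS -> x \in U).
all: try (apply: not_all_ex_not => hall; move/negP: hs; apply; exact/subvP).
all: have [hm hxU'] := imply_to_and _ _ hx.
all: move: hm; rewrite memv_cap => /andP [hxW hxo].
all: have hxU : x \notin U by apply/negP.
all: have hsub : (U <= U + <[x]>)%VS by exact: addvSl.
all: have hlt : (\dim U < \dim (U + <[x]>))%N.
all: try (rewrite (ltn_leqif (dimv_leqif_sup hsub)) subv_add subvv /= -memvE //).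
all: have hn : (\dim (U + <[x]>) <= n)%N.
all: try (apply: leq_trans (dimvS (subvf _)) _; rewrite dimvf dim_matrix mulr1 //).
all: try (exfalso; lia).
apply: (IH (U + <[x]>)%VS); first by lia.
  by rewrite subv_add hUW -memvE.
exact: iso_ext.
Qed.

End Main2.

From Stdlib Require Import Reals Classical.
From HB Require Import structures.
From mathcomp Require Import all_boot all_order all_algebra.
From mathcomp Require Import zify.
Set Implicit Arguments.
Unset Strict Implicit.
Unset Printing Implicit Defensive.
Import GRing.Theory.
Local Open Scope ring_scope.

Section Main3.
Variables (F : fieldType) (n : nat) (A : {vspace 'M[F]_n}) (d : nat).
Hypothesis hA : alt_space A.
Hypothesis hd : forall v, (deg_of A v <= d)%N.

Lemma decomp (W : {vspace 'cV[F]_n}) : exists s : seq {vspace 'cV[F]_n},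
  [/\ forall U, U \in s -> U != 0%VS,
      forall U, U \in s -> isotropic A U,
      (\sum_(U <- s) U)%VS = W,
      \dim W = (\sum_(U <- s) \dim U)%N &
      ((\dim W = 0)%N -> s = [::]) /\ ((0 < \dim W)%N ->
         Rle (INR (size s)) (Rplus (INR 1) (Rmult (INR d.+1) (ln (INR (\dim W))))))].
Proof.
suff: forall m (W : {vspace 'cV[F]_n}), (\dim W < m)%N -> exists s : seq {vspace 'cV[F]_n},
  [/\ forall U, U \in s -> U != 0%VS,
      forall U, U \in s -> isotropic A U,
      (\sum_(U <- s) U)%VS = W,
      \dim W = (\sum_(U <- s) \dim U)%N &
      ((\dim W = 0)%N -> s = [::]) /\ ((0 < \dim W)%N ->
         Rle (INR (size s)) (Rplus (INR 1) (Rmult (INR d.+1) (ln (INR (\dim W))))))].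
  by move=> /(_ (\dim W).+1 W (ltnSn _)).
elim=> [|m IH] {}W hWm; first by [].
case: (posnP (\dim W)) => hW0.
  exists [::]; split => //; rewrite ?big_nil //.
  by apply/esym/eqP; rewrite -dimv_eq0 hW0.
have [U [hUW hU hmax]] := max_iso hA W.
have hdimW : (\dim W <= \dim U * d.+1)%N.
  apply: (leq_trans (dim_orth A U W)).
  have := dimvS hmax; have := dim_BU hd U; lia.
set W' := (W :\: U)%VS.
have hWW' : \dim W = (\dim U + \dim W')%N.
  by rewrite -(dimv_cap_compl W U) (capv_idPr hUW).
have hU0 : (0 < \dim U)%N by nia.
have [s' [h1 h2 h3 h4 [h5 h6]]] := IH W' ltac:(lia).
exists (U :: s'); split.
- move=> V; rewrite in_cons => /orP [/eqP ->|]; last exact: h1.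
  by rewrite -dimv_eq0 -lt0n.
- by move=> V; rewrite in_cons => /orP [/eqP ->|]; last exact: h2.
- by rewrite big_cons h3 addvC -[RHS](addv_diff_cap W U) (capv_idPr hUW).
- by rewrite big_cons -h4.
split; first lia.
move=> _; case: (posnP (\dim W')) => hW'0.
  by rewrite (h5 hW'0); apply: (base_real _ (d.+1)); apply/leP.
rewrite hWW'; apply: (step_real (size s') (\dim W') (\dim U) d.+1).
- by apply/leP.
- by apply/leP; rewrite -mulnE -addnE; lia.
- exact: h6.
Qed.

End Main3.

From Stdlib Require Import Reals.
From HB Require Import structures.
From mathcomp Require Import all_boot all_order all_algebra.
Set Implicit Arguments.
Unset Strict Implicit.
Unset Printing Implicit Defensive.
Import GRing.Theory.
Local Open Scope ring_scope.

Lemma d_pos (F : fieldType) (n : nat) (A : {vspace 'M[F]_n}) (d : nat) :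
  A != 0%VS -> (forall v, (deg_of A v <= d)%N) -> (1 <= d)%N.
Proof.
move=> hA0 hd; rewrite lt0n; apply/negP => /eqP d0.
have hM : vpick A \in A := memv_pick A.
move: hA0; rewrite -vpick0 => /negP; apply; apply/eqP/matrixP => i j.
have h : deg_of A (delta_mx j 0) = 0%N by apply/eqP; have := hd (delta_mx j 0); rewrite d0 leqn0.
move/eqP: h; rewrite dimv_eq0 => /eqP h.
have := mem_img (delta_mx j 0) hM; rewrite /img h memv0 -colE => /eqP hc.
by have := congr1 (fun X : 'cV[F]_n => X i 0) hc; rewrite !mxE.
Qed.

Theorem proposition1p13 :
  exists C : R, Rlt (INR 0) C /\
    forall (F : fieldType) (n : nat), (2 <= n)%N ->
    forall A : {vspace 'M[F]_n}, alt_space A -> A != 0%VS ->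
    forall k d : nat, is_chi A k -> is_Delta A d ->
      Rle (INR k) (Rmult (Rmult C (INR d)) (log2R n)).
Proof.
exists C3; split; first exact: C3_pos.
move=> F n hn A hA hA0 k d [_ hchi] [_ hd].
have hd1 := d_pos hA0 hd.
have [s [h1 h2 h3 h4 [_ h6]]] := decomp hA hd fullv.
have hdimf : \dim (fullv : {vspace 'cV[F]_n}) = n by rewrite dimvf dim_matrix mulr1.
rewrite (big_nth 0%VS) big_mkord in h3.
rewrite (big_nth 0%VS) big_mkord in h4.
have hdec : iso_decomp A (size s).
  exists (fun i : 'I_(size s) => nth 0%VS s i); split.
  - by move=> i; apply: h1; apply: mem_nth.
  - by move=> i; apply: h2; apply: mem_nth.
  - by rewrite directvE /= h3 h4.
  - exact: h3.
have hks := hchi _ hdec.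
apply: (final_real _ (size s)).
- exact/leP.
- exact/leP.
- exact/leP.
- have := h6 ltac:(by rewrite hdimf; apply: leq_trans hn); by rewrite hdimf.
Qed.
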